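(* Let $\lambda_x>0$, $\lambda_y>0$, and let $X$ and $Y$ be independent random variables with $X\sim \mathrm{Poisson}(\lambda_x)$ and $Y\sim\mathrm{Poisson}(\lambda_y)$. Let $\alpha(\lambda_x,\lambda_y)=\frac{\lambda_x}{\lambda_y}\left(1-e^{-\lambda_y}\right)$. Then $$lb_{\lambda_y}(\lambda_x)\le \mathbb{E}\left[\frac{X}{X+Y+1}\right]\le ub_{\lambda_y}(\lambda_x),$$ where $$ub_{\lambda_y}(\lambda_x)=1-\frac{1}{1+\alpha(\lambda_x,\lambda_y)},\qquad lb_{\lambda_y}(\lambda_x)=\alpha(\lambda_x,\lambda_y)-\frac{\lambda_x(1+\lambda_x)}{\lambda_y}\sum_{j=1}^{\infty}\frac{(j-1)!}{\lambda_y^{j}}.$$ *)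

(* Defs.v *)
From HB Require Import structures.
From mathcomp Require Import all_boot all_order all_algebra.
From mathcomp Require Import all_classical all_reals.
From mathcomp Require Import ereal topology normedtype sequences exp.
From mathcomp Require Import poisson_distribution.
Set Implicit Arguments. Unset Strict Implicit. Unset Printing Implicit Defensive.
Import Order.TTheory GRing.Theory Num.Theory.
Local Open Scope ring_scope.
Local Open Scope ereal_scope.

(* E[ X / (X+Y+1) ] for independent X ~ Poisson(lx), Y ~ Poisson(ly):
   the expectation of a nonnegative function of the discrete pair (X,Y),
   whose joint pmf is the product of the marginal Poisson pmfs. *)
Definition E_ratio {R : realType} (lx ly : R) : \bar R :=
  \sum_(0 <= m <oo) \sum_(0 <= n <oo)
     ((poisson_pmf lx m * poisson_pmf ly n) * (m%:R / (m%:R + n%:R + 1)))%R%:E.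

Definition alpha {R : realType} (lx ly : R) : R :=
  (lx / ly * (1 - expR (- ly)))%R.

Definition ub {R : realType} (lx ly : R) : R :=
  (1 - 1 / (1 + alpha lx ly))%R.

Definition lb_series {R : realType} (ly : R) : \bar R :=
  \sum_(1 <= j <oo) ((j.-1)`!%:R / ly ^+ j)%R%:E.

Definition lb {R : realType} (lx ly : R) : \bar R :=
  (alpha lx ly)%:E - (lx * (1 + lx) / ly)%R%:E * lb_series ly.

(* Main.v *)
Require Import Defs.
From HB Require Import structures.
From mathcomp Require Import all_boot all_order all_algebra.
From mathcomp Require Import all_classical all_reals.
From mathcomp Require Import ereal topology normedtype sequences exp.
From mathcomp Require Import poisson_distribution.
From mathcomp Require Import ring lra zify.
Import Order.TTheory GRing.Theory Num.Theory.
Local Open Scope ring_scope.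
Local Open Scope ereal_scope.

Lemma exp_series (R : realType) (x : R) :
  \sum_(0 <= n <oo) ((x ^+ n) / n`!%:R)%:E = (expR x)%:E.
Proof.
rewrite expRE -EFin_lim; last first.
  rewrite /pseries/=; under eq_fun do rewrite mulrC.
  exact: is_cvg_series_exp_coeff.
apply/congr_lim/funext => n/=; rewrite /pseries/= /series/= -sumEFin//.
by under eq_bigr do rewrite mulrC.
Qed.

Lemma fin_of_sum (R : realType) (S : \bar R) (a b : R) :
  a%:E + S = b%:E -> S = (b - a)%:E.
Proof.
case: S => [s| |] //= [<-]; congr EFin; ring.
Qed.

Lemma shift_series (R : realType) (f : nat -> R) (F : R) :
  (forall n, (0 <= f n)%R) ->
  \sum_(0 <= n <oo) (f n)%:E = F%:E ->
  \sum_(0 <= n <oo) (f n.+1)%:E = (F - f 0%N)%:E.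
Proof.
move=> f0 hF.
have := @nneseries_split R (fun n => (f n)%:E) 0 1 (fun k _ => f0 k).
rewrite hF add0n big_nat1 => /esym /fin_of_sum <-.
have := @nneseries_addn R (fun n => (f n)%:E) 1 (fun k => f0 k).
by under eq_eseriesr do rewrite addn1.
Qed.

Lemma pois_sum (R : realType) (r : R) : (0 < r)%R ->
  \sum_(0 <= n <oo) (poisson_pmf r n)%:E = 1%:E.
Proof.
move=> r0.
under eq_eseriesr do rewrite /poisson_pmf r0 EFinM muleC.
rewrite nneseriesZl; last by move=> n _; rewrite lee_fin divr_ge0// exprn_ge0// ltW.
by rewrite exp_series -EFinM mulrC expRxMexpNx_1.
Qed.

Lemma unshift_series (R : realType) (f : nat -> R) (G : R) :
  (forall n, (0 <= f n)%R) ->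
  \sum_(0 <= n <oo) (f n.+1)%:E = G%:E ->
  \sum_(0 <= n <oo) (f n)%:E = (f 0%N + G)%:E.
Proof.
move=> f0 hG.
rewrite (@nneseries_split R (fun n => (f n)%:E) 0 1 (fun k _ => f0 k)).
rewrite add0n big_nat1 -(@nneseries_addn R (fun n => (f n)%:E) 1 (fun k => f0 k)).
under eq_eseriesr do rewrite addn1.
by rewrite hG.
Qed.

Lemma pois_mean (R : realType) (r : R) : (0 < r)%R ->
  \sum_(0 <= n <oo) (poisson_pmf r n * n%:R)%:E = r%:E.
Proof.
move=> r0.
rewrite (@unshift_series R (fun n => poisson_pmf r n * n%:R) r)%R.
- by rewrite mulr0 add0r.
- by move=> n; rewrite mulr_ge0// poisson_pmf_ge0.
rewrite (_ : \sum_(0 <= n <oo) _ = \sum_(0 <= n <oo) (r%:E * (poisson_pmf r n)%:E)); last first.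
  apply: eq_eseriesr => n _; rewrite -EFinM; congr EFin.
  rewrite /poisson_pmf r0 factS natrM exprS.
  have h1 : (n.+1%:R : R) != 0%R by rewrite pnatr_eq0.
  have h2 : (n`!%:R : R) != 0%R by rewrite pnatr_eq0 -lt0n fact_gt0.
  field; by apply/andP.
rewrite nneseriesZl ?pois_sum//.
by rewrite -EFinM mulr1.
by move=> n _; rewrite lee_fin poisson_pmf_ge0.
Qed.

Lemma pois_inv (R : realType) (r : R) : (0 < r)%R ->
  \sum_(0 <= n <oo) (poisson_pmf r n / n.+1%:R)%:E = ((1 - expR (- r)) / r)%:E.
Proof.
move=> r0.
have hs : \sum_(0 <= n <oo) ((r ^+ n.+1) / (n.+1)`!%:R)%:E = (expR r - 1)%:E.
  rewrite (@shift_series R (fun n => (r ^+ n) / n`!%:R) (expR r))%R.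
  - by rewrite expr0 divr1.
  - by move=> n; rewrite divr_ge0// exprn_ge0// ltW.
  exact: exp_series.
rewrite (_ : \sum_(0 <= n <oo) _ = (\sum_(0 <= n <oo)
   ((expR (- r) / r)%:E * ((r ^+ n.+1) / (n.+1)`!%:R)%:E))%E); last first.
  apply: eq_eseriesr => n _; rewrite -EFinM; congr EFin.
  rewrite /poisson_pmf r0 factS natrM exprS.
  have h1 : (n.+1%:R : R) != 0%R by rewrite pnatr_eq0.
  have h2 : (n`!%:R : R) != 0%R by rewrite pnatr_eq0 -lt0n fact_gt0.
  have h3 : r != 0%R by rewrite gt_eqF.
  field; rewrite h2 h3 addrC natr1 pnatr_eq0 //.
rewrite nneseriesZl ?hs; last by move=> n _; rewrite lee_fin divr_ge0// exprn_ge0// ltW.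
rewrite -EFinM; congr EFin; rewrite expRN.
have h3 : r != 0%R by rewrite gt_eqF.
have h4 : expR r != 0%R by rewrite gt_eqF// expR_gt0.
field; by rewrite h3 h4.
Qed.

Lemma key_ineq (R : realType) (a : R) (m n : nat) : (0 <= a)%R ->
  (m%:R / (m%:R + n%:R + 1) <= (a ^+ 2 + m%:R / n.+1%:R) / (1 + a) ^+ 2)%R.
Proof.
move=> a0; rewrite -subr_ge0.
set M : R := m%:R. set N : R := n%:R.
have M0 : (0 <= M)%R by rewrite ler0n.
have N0 : (0 <= N)%R by rewrite ler0n.
have -> : (n.+1%:R = N + 1 :> R)%R by rewrite -natr1.
have h1 : (N + 1 != 0)%R by rewrite gt_eqF//; lra.
have h2 : (M + N + 1 != 0)%R by rewrite gt_eqF//; lra.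
have h3 : (1 + a != 0)%R by rewrite gt_eqF//; lra.
rewrite (_ : (_ - _ = (a * (N + 1) - M) ^+ 2 / ((N + 1) * (M + N + 1) * (1 + a) ^+ 2))%R); last first.
  field; by rewrite h1 h2 h3.
apply: divr_ge0; first exact: sqr_ge0.
apply: mulr_ge0; last exact: sqr_ge0.
apply: mulr_ge0; lra.
Qed.

Lemma sumlin (R : realType) (f g : nat -> R) (c d F G : R) :
  (forall n, (0 <= f n)%R) -> (forall n, (0 <= g n)%R) -> (0 <= c)%R -> (0 <= d)%R ->
  \sum_(0 <= n <oo) (f n)%:E = F%:E -> \sum_(0 <= n <oo) (g n)%:E = G%:E ->
  \sum_(0 <= n <oo) (c * f n + d * g n)%:E = (c * F + d * G)%:E.
Proof.
move=> f0 g0 c0 d0 hF hG.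
under eq_eseriesr do rewrite EFinD EFinM EFinM.
rewrite nneseriesD; last 2 first.
- by move=> n _ _; rewrite -EFinM lee_fin mulr_ge0.
- by move=> n _ _; rewrite -EFinM lee_fin mulr_ge0.
rewrite nneseriesZl; last by move=> n _; rewrite lee_fin.
rewrite nneseriesZl; last by move=> n _; rewrite lee_fin.
by rewrite hF hG -!EFinM -EFinD.
Qed.

Lemma upper (R : realType) (lx ly : R) (hx : (0 < lx)%R) (hy : (0 < ly)%R) :
  E_ratio lx ly <= (ub lx ly)%:E.
Proof.
set a := alpha lx ly.
set Sy := ((1 - expR (- ly)) / ly)%R.
have Sy0 : (0 <= Sy)%R.
  apply: divr_ge0; last exact: ltW.
  by rewrite subr_ge0 expR_le1 oppr_le0 ltW.
have aE : a = (lx * Sy)%R.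
  rewrite /a /alpha /Sy; field; by rewrite gt_eqF.
have a0 : (0 <= a)%R by rewrite aE mulr_ge0// ltW.
set c := (a ^+ 2 / (1 + a) ^+ 2)%R.
set d := (1 / (1 + a) ^+ 2)%R.
have c0 : (0 <= c)%R by rewrite divr_ge0// ?sqr_ge0.
have d0 : (0 <= d)%R by rewrite divr_ge0// ?sqr_ge0.
have pp := @poisson_pmf_ge0 R.
rewrite /E_ratio.
apply: (@le_trans _ _ (\sum_(0 <= m <oo) \sum_(0 <= n <oo)
   ((c * poisson_pmf lx m) * poisson_pmf ly n +
    (d * (poisson_pmf lx m * m%:R)) * (poisson_pmf ly n / n.+1%:R))%R%:E)).
  apply: lee_nneseries.
    move=> m _ _; apply: nneseries_ge0 => n _ _.
    by rewrite lee_fin mulr_ge0 ?mulr_ge0// divr_ge0// addr_ge0// ?addr_ge0.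
  move=> m _; apply: lee_nneseries.
    move=> n _ _.
    by rewrite lee_fin mulr_ge0 ?mulr_ge0// divr_ge0// addr_ge0// ?addr_ge0.
  move=> n _; rewrite lee_fin.
  rewrite (_ : (_ + _ = (poisson_pmf lx m * poisson_pmf ly n) *
     ((a ^+ 2 + m%:R / n.+1%:R) / (1 + a) ^+ 2))%R); last first.
    rewrite /c /d; have h : ((1 + a) != 0)%R by rewrite gt_eqF//; lra.
    field; by rewrite h /= addrC natr1 pnatr_eq0.
  by rewrite ler_wpM2l ?mulr_ge0// key_ineq.
under eq_eseriesr => m _.
  rewrite (@sumlin R (poisson_pmf ly) (fun n => poisson_pmf ly n / n.+1%:R)%R
     _ _ 1%R Sy) //; last first.
  - exact: pois_inv.
  - exact: pois_sum.
  - by rewrite mulr_ge0// mulr_ge0.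
  - by rewrite mulr_ge0.
  - by move=> n; rewrite divr_ge0.
  rewrite (_ : (_ + _ = c * poisson_pmf lx m + (d * Sy) * (poisson_pmf lx m * m%:R))%R); last by ring.
  over.
rewrite (@sumlin R (poisson_pmf lx) (fun m => poisson_pmf lx m * m%:R)%R
     _ _ 1%R lx) //; last first.
- exact: pois_mean.
- exact: pois_sum.
- by rewrite mulr_ge0.
- by move=> n; rewrite mulr_ge0.
rewrite lee_fin /ub -/a /c /d.
have h : ((1 + a) != 0)%R by rewrite gt_eqF//; lra.
rewrite le_eqVlt; apply/orP; left; apply/eqP.
rewrite aE; rewrite aE in h; field; by rewrite h.
Qed.
Lemma lb_series_inf (R : realType) (ly : R) : (0 < ly)%R -> lb_series ly = +oo.
Proof.
move=> hy; apply/eqyP => A A0.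
set E := expR (2 * ly).
have E0 : (0 < E)%R by apply: expR_gt0.
set n := Num.truncn (A * E * ly).
have hn : (A * E * ly < n.+1%:R)%R by apply: truncnS_gt.
have hb := @expR_ge1Dxn R (2 * ly) n (ltW (mulr_gt0 (ltr0Sn R 1) hy)).
rewrite -/E in hb.
apply: (le_trans _ (@nneseries_lim_ge R (fun j => ((j.-1)`!%:R / ly ^+ j)%R%:E) xpredT 1%N n.+3 _)); last first.
  by move=> k _ _; rewrite lee_fin divr_ge0// exprn_ge0// ltW.
rewrite big_nat_recr//= -[X in X <= _]add0e; apply: leeD.
  by rewrite sume_ge0// => k _; rewrite lee_fin divr_ge0// exprn_ge0// ltW.
rewrite lee_fin.
have h2 : (n.+1%:R <= (2:R) ^+ n.+1)%R.
  rewrite -natrX ler_nat; elim: (n.+1) => // k IH.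
  by rewrite expnS; lia.
have hf : (0 < (n.+1)`!%:R :> R)%R by rewrite ltr0n fact_gt0.
have hly : (0 < ly ^+ n.+1)%R by rewrite exprn_gt0.
have key : ((2:R) ^+ n.+1 <= E * ((n.+1)`!%:R / ly ^+ n.+1))%R.
  have : ((2 * ly) ^+ n.+1 / (n.+1)`!%:R <= E)%R by lra.
  rewrite exprMn ler_pdivrMr // => H.
  rewrite mulrA ler_pdivlMr //; lra.
rewrite exprS.
rewrite [X in (_ <= X)%R](_ : _ = ((n.+1)`!%:R / ly ^+ n.+1) / ly)%R; last first.
  by rewrite invfM mulrA [X in _ = X]mulrAC.
rewrite ler_pdivlMr //.
have : (E * (A * ly) <= E * ((n.+1)`!%:R / ly ^+ n.+1))%R.
  have -> : (E * (A * ly) = A * E * ly)%R by ring.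
  lra.
by rewrite ler_pM2l.
Qed.

Theorem lemma2 (R : realType) (lx ly : R) (hx : (0 < lx)%R) (hy : (0 < ly)%R) :
  lb lx ly <= E_ratio lx ly /\ E_ratio lx ly <= (ub lx ly)%:E.
Proof.
split; last exact: upper.
rewrite /lb lb_series_inf // mulry gtr0_sg; last first.
  by rewrite divr_gt0// mulr_gt0// addr_gt0.
rewrite mul1e (_ : (alpha lx ly)%:E - +oo = -oo) //; exact: leNye.
Qed.
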